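(* Let $r\in\mathbb N$ and $0\le k\le r$. There are constants $C(k,r)$ and $C(r)$ such that for all $f\in\mathbf E^{r}$ and all $s>0$: (I) $\|f\|_{\mathbf E^{k}}\le C(k,r)\,\|f\|_{\mathbf E}^{1-k/r}\,\|f\|_{\mathbf E^{r}}^{k/r}$; (II) $K(s^{r},f,\mathbf E,\mathbf E^{r})\le C(r)\,s^{r}\,\|f\|_{\mathbf E^{r}}$.
   Context: Let $G=\mathbb R_+\times\mathbb R$ be the ''$ax+b$'' group with multiplication $(a_1,b_1)(a_2,b_2)=(a_1a_2,\,a_1b_2+b_1)$. Let $T$ be a strongly continuous representation of $G$ in a Banach space $\mathbf E$ with $\|T(g)f\|_{\mathbf E}\le\|f\|_{\mathbf E}$. Put $T_1(t)=T(e^{t},0)$, $T_2(t)=T(1,t)$, with (closed) generators $\mathbb A_1,\mathbb A_2$. For $r\in\mathbb N$, $\mathbf E^{r}$ is the space of $f\in\mathbf E$ for which all products $\mathbb A_{j_1}\cdots\mathbb A_{j_k}f$, $1\le k\le r$, $j_i\in\{1,2\}$, are defined, with norm $\|f\|_{\mathbf E^r}=\|f\|_{\mathbf E}+\sum_{k=1}^r\sum_{(j_1,\dots,j_k)\in\{1,2\}^k}\|\mathbb A_{j_1}\cdots\mathbb A_{j_k}f\|_{\mathbf E}$; $\mathbf E^0=\mathbf E$. $K(t,f,\mathbf E,\mathbf E^r)=\inf\{\|f_0\|_{\mathbf E}+t\|f_1\|_{\mathbf E^r}: f=f_0+f_1,\ f_0\in\mathbf E,\ f_1\in\mathbf E^r\}$.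 *)

(* Defs.v *)
From HB Require Import structures.
From mathcomp Require Import all_boot all_order all_algebra.
From mathcomp Require Import all_classical all_reals all_analysis.
Set Implicit Arguments. Unset Strict Implicit. Unset Printing Implicit Defensive.
Import Order.TTheory GRing.Theory Num.Theory.
Import numFieldNormedType.Exports.
Local Open Scope classical_set_scope.
Local Open Scope ring_scope.

(* The "ax+b" group G = R_+ x R, (a1,b1)(a2,b2) = (a1 a2, a1 b2 + b1).
   A representation is given as T : R -> R -> E -> E, where T a b is T(a,b);
   only values with a > 0 are meaningful. *)
Section Rep.
Variables (R : realType) (E : completeNormedModType R).
Implicit Types (T : R -> R -> E -> E).

Definition is_contr_rep T : Prop :=
  [/\ (forall (a b : R), 0 < a -> forall (c : R) (f g : E),
          T a b (c *: f + g) = c *: T a b f + T a b g),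
      T 1 0 =1 id,
      (forall a1 b1 a2 b2 : R, 0 < a1 -> 0 < a2 ->
          T (a1 * a2) (a1 * b2 + b1) =1 T a1 b1 \o T a2 b2),
      (forall (a b : R) (f : E), 0 < a ->
          (fun p : R * R => T p.1 p.2 f) @ ((a, b) : R * R) --> T a b f) &
      (forall (a b : R) (f : E), 0 < a -> `|T a b f| <= `|f|)].

(* one-parameter subgroups: j = false gives T_1(t) = T(e^t,0),
   j = true gives T_2(t) = T(1,t) *)
Definition Tsub T (j : bool) (t : R) : E -> E :=
  if j then T 1 t else T (expR t) 0.

Definition diffq T j (f : E) : R -> E := fun t => t^-1 *: (Tsub T j t f - f).

Definition gen_dom T j (f : E) : Prop := cvg (diffq T j f @ 0^').

Definition gen T j (f : E) : E := lim (diffq T j f @ 0^').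

Fixpoint apply_seq T (js : seq bool) (f : E) : E :=
  if js is j :: js' then gen T j (apply_seq T js' f) else f.

Fixpoint seq_dom T (js : seq bool) (f : E) : Prop :=
  if js is j :: js' then seq_dom T js' f /\ gen_dom T j (apply_seq T js' f)
  else True.

Definition inEr T (r : nat) (f : E) : Prop :=
  forall js : seq bool, (size js <= r)%N -> seq_dom T js f.

Definition normEr T (r : nat) (f : E) : R :=
  `|f| + \sum_(k < r) \sum_(js : (k.+1).-tuple bool) `|apply_seq T js f|.

Definition Kfun T (r : nat) (t : R) (f : E) : R :=
  inf [set x : R | exists f0 f1 : E,
         [/\ f = f0 + f1, inEr T r f1 & x = `|f0| + t * normEr T r f1]].

End Rep.

(* Main.v *)
Require Import Defs.
From HB Require Import structures.
From mathcomp Require Import all_boot all_order all_algebra.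
From mathcomp Require Import all_classical all_reals all_analysis.
From mathcomp Require Import ring lra.
Import Order.TTheory GRing.Theory Num.Theory.
Import numFieldNormedType.Exports.
Set Implicit Arguments. Unset Strict Implicit.
Local Open Scope ring_scope.

Lemma U_lin (R : realType) (E : completeNormedModType R) (T : R -> R -> E -> E)
  (HT : is_contr_rep T) j t (c : R) (f g : E) :
  Tsub T j t (c *: f + g) = c *: Tsub T j t f + Tsub T j t g.
Proof. case: HT => Hl _ _ _ _; rewrite /Tsub; case: j; apply: Hl => //; exact: expR_gt0. Qed.

Lemma U_contr (R : realType) (E : completeNormedModType R) (T : R -> R -> E -> E)
  (HT : is_contr_rep T) j t (f : E) : `|Tsub T j t f| <= `|f|.
Proof. case: HT => _ _ _ _ Hc; rewrite /Tsub; case: j; apply: Hc => //; exact: expR_gt0. Qed.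

Lemma U0 (R : realType) (E : completeNormedModType R) (T : R -> R -> E -> E)
  (HT : is_contr_rep T) j (f : E) : Tsub T j 0 f = f.
Proof. case: HT => _ H1 _ _ _; rewrite /Tsub; case: j => //; by rewrite expR0 H1. Qed.

Lemma Uadd (R : realType) (E : completeNormedModType R) (T : R -> R -> E -> E)
  (HT : is_contr_rep T) j s t (f : E) : Tsub T j (s + t) f = Tsub T j s (Tsub T j t f).
Proof.
case: HT => _ _ Hm _ _; rewrite /Tsub; case: j.
  by have := Hm 1 s 1 t ltr01 ltr01 f; rewrite mul1r mul1r addrC.
have := Hm (expR s) 0 (expR t) 0 (expR_gt0 _) (expR_gt0 _) f.
by rewrite mulr0 addr0 -expRD.
Qed.

Lemma U_zero (R : realType) (E : completeNormedModType R) (T : R -> R -> E -> E)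
  (HT : is_contr_rep T) j t : Tsub T j t 0 = 0.
Proof.
have := U_lin HT j t 1 0 0; rewrite scale1r addr0 scale1r => H.
by apply: (@addrI _ (Tsub T j t 0)); rewrite addr0 -H.
Qed.

Lemma U_sub (R : realType) (E : completeNormedModType R) (T : R -> R -> E -> E)
  (HT : is_contr_rep T) j t (f g : E) : Tsub T j t (f - g) = Tsub T j t f - Tsub T j t g.
Proof. have := U_lin HT j t (-1) g f; rewrite !scaleN1r addrC => ->; by rewrite addrC. Qed.

Lemma U_scale (R : realType) (E : completeNormedModType R) (T : R -> R -> E -> E)
  (HT : is_contr_rep T) j t c (f : E) : Tsub T j t (c *: f) = c *: Tsub T j t f.
Proof. by have := U_lin HT j t c f 0; rewrite !addr0 U_zero // addr0. Qed.

Lemma gen_zero (R : realType) (E : completeNormedModType R) (T : R -> R -> E -> E)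
  (HT : is_contr_rep T) j : gen T j 0 = 0.
Proof.
rewrite /gen /diffq.
have -> : (fun t : R => t^-1 *: (Tsub T j t 0 - 0)) = fun=> (0 : E).
  by apply: funext => t; rewrite U_zero // subrr scaler0.
by rewrite lim_cst.
Qed.

Lemma apply_seq_zero (R : realType) (E : completeNormedModType R) (T : R -> R -> E -> E)
  (HT : is_contr_rep T) js : apply_seq T js 0 = 0.
Proof. by elim: js => //= j js ->; rewrite gen_zero. Qed.

Lemma gen_delta (R : realType) (E : completeNormedModType R) (T : R -> R -> E -> E)
  j x (Hx : gen_dom T j x) (e : R) : 0 < e ->
  exists2 d : R, 0 < d & forall h, 0 < h -> h < d -> `|gen T j x - diffq T j x h| < e.
Proof.
move=> e0; move: Hx; rewrite /gen_dom => /cvg_ex [l Hl].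
have -> : gen T j x = l by rewrite /gen (cvg_lim _ Hl).
move/cvgrPdist_lt : Hl => /(_ e e0).
rewrite /prop_near1 /within /= => /nbhs_ballP [d /= d0 Hd].
exists d => // h h0 hd; apply: Hd; last by rewrite gt_eqF.
by rewrite /ball /= sub0r normrN gtr0_norm.
Qed.

Lemma exists_n (R : realType) (t d : R) : 0 < d -> 0 <= t ->
  exists n : nat, (0 < n)%N /\ t / n%:R < d.
Proof.
move=> d0 t0; exists (Num.truncn (t / d)).+1; split => //.
rewrite ltr_pdivrMr ?ltr0Sn // mulrC -ltr_pdivrMr //.
exact: truncnS_gt.
Qed.

Lemma U_telescope (R : realType) (E : completeNormedModType R) (T : R -> R -> E -> E)
  (HT : is_contr_rep T) j (h : R) (x : E) (n : nat) :
  Tsub T j (n%:R * h) x - x = \sum_(i < n) Tsub T j (i%:R * h) (Tsub T j h x - x).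
Proof.
elim: n => [|n IH]; first by rewrite big_ord0 mul0r U0 // subrr.
rewrite big_ord_recr /= -IH U_sub // -addn1 natrD mulrDl mul1r Uadd //.
by rewrite [X in _ = X]addrC addrA subrK.
Qed.

Lemma diffq_scale (R : realType) (E : completeNormedModType R) (T : R -> R -> E -> E)
  j x (h : R) : h != 0 -> Tsub T j h x - x = h *: diffq T j x h.
Proof. by move=> h0; rewrite /diffq scalerA mulfV // scale1r. Qed.

Lemma L1 (R : realType) (E : completeNormedModType R) (T : R -> R -> E -> E)
  (HT : is_contr_rep T) j x (Hx : gen_dom T j x) (t : R) : 0 <= t ->
  `|Tsub T j t x - x| <= t * `|gen T j x|.
Proof.
move=> t0; apply/ler_addgt0Pr => e e0.
have te0 : 0 < e / (t + 1) by rewrite divr_gt0 // ltr_wpDl.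
have [d d0 Hd] := gen_delta Hx te0.
have [n [n0 hd]] := exists_n d0 t0.
set h := t / n%:R.
have hn : t = n%:R * h by rewrite /h mulrC divfK // pnatr_eq0 -lt0n.
have h0 : 0 <= h by rewrite divr_ge0.
have [h00|hp] := eqVneq h 0.
  by rewrite hn h00 mulr0 U0 // subrr normr0 addr_ge0 // ?ltW // mulr_ge0.
have hp' : 0 < h by rewrite lt_neqAle eq_sym hp h0.
rewrite {1}hn U_telescope //.
apply: (le_trans (ler_norm_sum _ _ _)).
apply: (le_trans (y := \sum_(i < n) `|Tsub T j h x - x|)).
  by apply: ler_sum => i _; apply: U_contr.
rewrite sumr_const card_ord diffq_scale // normrZ (gtr0_norm hp').
have Hb : `|diffq T j x h| <= `|gen T j x| + e / (t + 1).
  have := ler_normD (diffq T j x h - gen T j x) (gen T j x); rewrite subrK => H.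
  apply: (le_trans H); rewrite addrC lerD2l distrC; exact: ltW (Hd h hp' hd).
rewrite -mulr_natl mulrA.
rewrite -hn.
apply: (le_trans (ler_wpM2l t0 Hb)); rewrite mulrDr lerD2l.
rewrite mulrA ler_pdivrMr ?ltr_wpDl // mulrC ler_wpM2l ?ltW //.
by rewrite ltrDl.
Qed.

Lemma L2 (R : realType) (E : completeNormedModType R) (T : R -> R -> E -> E)
  (HT : is_contr_rep T) j x (Hx : gen_dom T j x) (Hy : gen_dom T j (gen T j x))
  (t : R) : 0 < t ->
  t * `|gen T j x| <= 2 * `|x| + t ^+ 2 * `|gen T j (gen T j x)|.
Proof.
move=> t0; apply/ler_addgt0Pr => e e0.
set y := gen T j x.
have te0 : 0 < e / (t + 1) by rewrite divr_gt0 // ltr_wpDl // ltW.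
have [d d0 Hd] := gen_delta Hx te0.
have [n [n0 hd]] := exists_n d0 (ltW t0).
set h := t / n%:R.
have hn : t = n%:R * h by rewrite /h mulrC divfK // pnatr_eq0 -lt0n.
have hp : 0 < h by rewrite divr_gt0 // ltr0n.
have key : t *: y - (Tsub T j t x - x) =
   \sum_(i < n) (h *: (y - Tsub T j (i%:R * h) y) +
                 Tsub T j (i%:R * h) (h *: (y - diffq T j x h))).
  rewrite {2}hn U_telescope // diffq_scale ?gt_eqF //.
  have -> : t *: y = \sum_(i < n) h *: y.
    by rewrite sumr_const card_ord -scaler_nat scalerA; congr (_ *: _).
  rewrite -sumrN -big_split /=.
  apply: eq_bigr => i _.
  rewrite scalerBr (scalerBr h y (diffq T j x h)) U_sub // (U_scale HT j (i%:R * h) h y).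
  by rewrite addrA subrK.
have Hterm : forall i : 'I_n,
  `|h *: (y - Tsub T j (i%:R * h) y) + Tsub T j (i%:R * h) (h *: (y - diffq T j x h))|
   <= h * t * `|gen T j y| + h * (e / (t + 1)).
  move=> i; apply: (le_trans (ler_normD _ _)); apply: lerD.
    rewrite normrZ gtr0_norm // -mulrA (ler_wpM2l (ltW hp)) // distrC.
    apply: (le_trans (L1 HT Hy _)); first by rewrite mulr_ge0 // ltW.
    rewrite ler_wpM2r // hn (ler_wpM2r (ltW hp)) // ler_nat ltnW //.
  apply: (le_trans (U_contr HT _ _ _)).
  rewrite normrZ gtr0_norm // (ler_wpM2l (ltW hp)).
    by []. exact: ltW (Hd h hp hd).
have Hsum : `|t *: y - (Tsub T j t x - x)| <= t ^+ 2 * `|gen T j y| + e.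
  rewrite key; apply: (le_trans (ler_norm_sum _ _ _)).
  apply: (le_trans (ler_sum _ (fun i _ => Hterm i))).
  rewrite sumr_const card_ord -mulr_natl mulrDr !mulrA.
  have hnt : n%:R * t / n%:R = t by rewrite mulrC mulKf // pnatr_eq0 -lt0n.
  rewrite hnt -expr2 lerD2l.
  rewrite ler_pdivrMr ?ltr_wpDl ?ltW //.
by rewrite mulrC ltr_pM2l // ltrDl.
have Hx2 : `|Tsub T j t x - x| <= 2 * `|x|.
  apply: (le_trans (ler_normB _ _)); rewrite mulr2n mulrDl mul1r lerD2r.
  exact: U_contr.
have := ler_normD (t *: y - (Tsub T j t x - x)) (Tsub T j t x - x).
rewrite subrK normrZ gtr0_norm // => H.
apply: (le_trans H); rewrite addrC -addrA; apply: lerD => //.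
Qed.

Lemma L3 (R : realType) (E : completeNormedModType R) (T : R -> R -> E -> E)
  (HT : is_contr_rep T) j x (Hx : gen_dom T j x) (Hy : gen_dom T j (gen T j x)) :
  `|gen T j x| ^+ 2 <= 8 * (`|x| * `|gen T j (gen T j x)|).
Proof.
set a := `|gen T j x|; set b := `|x|; set c := `|gen T j (gen T j x)|.
have H := L2 HT Hx Hy; rewrite -/a -/b -/c in H.
have a0 : 0 <= a by exact: normr_ge0. have b0 : 0 <= b by exact: normr_ge0.
have c0 : 0 <= c by exact: normr_ge0.
have [cz|cp] := eqVneq c 0.
  rewrite cz mulr0 mulr0.
  have [az|ap] := eqVneq a 0; first by rewrite az expr0n.
  have ap' : 0 < a by rewrite lt_neqAle eq_sym ap a0.
  have := H ((2 * b + 1) / a) (divr_gt0 (ltr_wpDl (mulr_ge0 _ b0) ltr01) ap').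
  rewrite cz mulr0 addr0 divfK // => Hc; exfalso; lra.
have cp' : 0 < c by rewrite lt_neqAle eq_sym cp c0.
have [az|ap] := eqVneq a 0; first by rewrite az expr0n /= mulr_ge0 // mulr_ge0.
have ap' : 0 < a by rewrite lt_neqAle eq_sym ap a0.
have := H (a / (2 * c)) (divr_gt0 ap' (mulr_gt0 (ltr0Sn _ 1) cp')).
move=> H2.
have e1 : a / (2 * c) * a = a ^+ 2 / (2 * c) by rewrite mulrAC expr2.
have e2 : (a / (2 * c)) ^+ 2 * c = a ^+ 2 / (4 * c).
  field.
  by [].
rewrite e1 e2 in H2.
have : a ^+ 2 / (4 * c) <= 2 * b.
  have : a ^+ 2 / (2 * c) - a ^+ 2 / (4 * c) <= 2 * b by rewrite lerBlDr.
  suff -> : a ^+ 2 / (2 * c) - a ^+ 2 / (4 * c) = a ^+ 2 / (4 * c) by [].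
  by field; rewrite cp.
rewrite ler_pdivrMr ?mulr_gt0 //.
by rewrite (_ : 2 * b * (4 * c) = 8 * (b * c)) //; ring.
Qed.

Lemma pow_mono_C (R : realType) (C : R) m n : 1 <= C -> (m <= n)%N -> C ^+ m <= C ^+ n.
Proof.
move=> C1 mn; rewrite -(subnK mn) exprD ler_peMl //; last exact: exprn_ege1.
by rewrite exprn_ge0 // (le_trans ler01 C1).
Qed.

Lemma seq_interp (R : realType) (C : R) (r : nat) (a : nat -> R) :
  1 <= C -> (forall k, (k <= r)%N -> 0 < a k) ->
  (forall k, (0 < k)%N -> (k < r)%N -> a k ^+ 2 <= C * (a k.-1 * a k.+1)) ->
  forall k, (k <= r)%N -> a k ^+ r <= C ^+ (r * r * r) * (a 0 ^+ (r - k) * a r ^+ k).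
Proof.
move=> C1 apos Hrec k kr.
have C0 : 0 < C by apply: lt_le_trans C1.
pose q i := a i.+1 / a i.
have qpos i : (i < r)%N -> 0 < q i.
  by move=> ir; rewrite divr_gt0 // apos // ltnW.
have qstep i : (i.+1 < r)%N -> q i <= C * q i.+1.
  move=> ir; have := Hrec i.+1 isT ir => /=.
  have a0 := apos i (ltnW (ltnW ir)); have a1 := apos i.+1 (ltnW ir).
  have a2 := apos i.+2 ir.
  move=> H; rewrite /q -(ler_pM2r (mulr_gt0 a0 a1)).
  have -> : a i.+1 / a i * (a i * a i.+1) = a i.+1 ^+ 2.
    by field; rewrite gt_eqF.
  have -> : C * (a i.+2 / a i.+1) * (a i * a i.+1) = C * (a i * a i.+2).
    by field; rewrite gt_eqF.
  exact: H.
have qchain i j : (i <= j)%N -> (j < r)%N -> q i <= C ^+ (j - i) * q j.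
  move=> ij jr; elim: j ij jr => [|j IH] ij jr.
    by move: ij; rewrite leqn0 => /eqP ->; rewrite subnn expr0 mul1r.
  move: ij; rewrite leq_eqVlt => /orP [/eqP ->|ij]; first by rewrite subnn expr0 mul1r.
  apply: (le_trans (IH ij (ltnW jr))).
  rewrite subSn // exprS -mulrA.
  rewrite [X in _ <= X]mulrCA; apply: (ler_wpM2l (exprn_ge0 _ (ltW C0))).
  exact: qstep _ jr.
set M := C ^+ r.
have qM i j : (i <= j)%N -> (j < r)%N -> q i <= M * q j.
  move=> ij jr; apply: (le_trans (qchain i j ij jr)).
  apply: (ler_wpM2r (ltW (qpos j jr))); apply: pow_mono_C => //.
  exact: leq_trans (leq_subr _ _) (ltnW jr).
have aprod n : (n <= r)%N -> a n = a 0 * \prod_(0 <= i < n) q i.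
  elim: n => [|n IH] nr; first by rewrite big_geq // mulr1.
  rewrite big_nat_recr //= mulrA -IH; last exact: ltnW.
  have an : a n != 0 by rewrite gt_eqF // apos // ltnW.
  by rewrite /q mulrC divfK.
have qge i : (i < r)%N -> 0 <= q i by move=> ir; exact: ltW (qpos i ir).
have M0 : 0 <= M by rewrite exprn_ge0 // ltW.
set P1 := \prod_(0 <= i < k) q i.
set P2 := \prod_(k <= i < r) q i.
have P1ge : 0 <= P1.
  rewrite /P1 big_nat_cond; apply: prodr_ge0 => i /andP [/andP [_ ik] _].
  by apply: qge; exact: leq_trans ik kr.
have P2ge : 0 <= P2.
  rewrite /P2 big_nat_cond; apply: prodr_ge0 => i /andP [/andP [_ ik] _].
  exact: qge.
have key : P1 ^+ (r - k) <= M ^+ ((r - k) * k) * P2 ^+ k.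
  rewrite /P1 -prodrXl.
  apply: (le_trans (y := \prod_(0 <= i < k) (M ^+ (r - k) * P2))).
    rewrite big_nat_cond [X in _ <= X]big_nat_cond.
    apply: ler_prod => i /andP [/andP [_ ik] _].
    have ir : (i < r)%N by exact: leq_trans ik kr.
    rewrite exprn_ge0 ?qge //=.
    rewrite -(prodr_const_nat k r (q i)) /P2 -(prodr_const_nat k r M) -big_split /=.
    rewrite big_nat_cond [X in _ <= X]big_nat_cond.
    apply: ler_prod => j /andP [/andP [kj jr] _].
    rewrite qge //=; apply: qM => //; exact: leq_trans (ltnW ik) kj.
  by rewrite prodr_const_nat subn0 exprMn exprM.
have ak : a k = a 0 * P1 by exact: aprod k kr.
have ar : a r = a 0 * P1 * P2.
  by rewrite (aprod r (leqnn r)) (@big_cat_nat _ _ _ k 0 r _ _ (leq0n k) kr) mulrA.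
have a00 : 0 <= a 0 by exact: ltW (apos 0 (leq0n r)).
have eL : a k ^+ r = a 0 ^+ (r - k) * P1 ^+ (r - k) * (a 0 * P1) ^+ k.
  by rewrite ak -exprMn -exprD subnK.
have eR : M ^+ ((r - k) * k) * (a 0 ^+ (r - k) * a r ^+ k) =
   a 0 ^+ (r - k) * (M ^+ ((r - k) * k) * P2 ^+ k) * (a 0 * P1) ^+ k.
  by rewrite ar exprMn; ring.
apply: (le_trans (y := M ^+ ((r - k) * k) * (a 0 ^+ (r - k) * a r ^+ k))).
  rewrite eL eR; apply: ler_wpM2r; first by rewrite exprn_ge0 // mulr_ge0.
  by apply: ler_wpM2l; rewrite ?exprn_ge0.
apply: ler_wpM2r; first by rewrite mulr_ge0 // exprn_ge0 // ltW // apos.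
rewrite /M -exprM; apply: pow_mono_C => //.
rewrite -mulnA leq_mul2l; apply/orP; right.
by apply: leq_mul => //; exact: leq_subr.
Qed.

Lemma sum_sq (R : realType) (I : finType) (F : I -> R) (B : R) :
  0 <= B -> (forall i, 0 <= F i) -> (forall i, F i ^+ 2 <= B) ->
  (\sum_i F i) ^+ 2 <= (#|I|%:R) ^+ 2 * B.
Proof.
move=> B0 F0 FB.
have Fs i : F i <= Num.sqrt B.
  by rewrite -(ger0_norm (F0 i)) -sqrtr_sqr ler_sqrt.
have S : \sum_i F i <= #|I|%:R * Num.sqrt B.
  apply: (le_trans (ler_sum _ (fun i _ => Fs i))).
  by rewrite sumr_const mulr_natl.
have S0 : 0 <= \sum_i F i by apply: sumr_ge0.
rewrite -(sqr_sqrtr B0) -exprMn.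
by rewrite ler_pXn2r ?nnegrE // mulr_ge0 // sqrtr_ge0.
Qed.

Lemma normEr_S (R : realType) (E : completeNormedModType R) (T : R -> R -> E -> E)
  k (f : E) : normEr T k.+1 f =
   normEr T k f + \sum_(js : (k.+1).-tuple bool) `|apply_seq T js f|.
Proof. by rewrite /normEr big_ord_recr /= addrA. Qed.

Lemma normEr_ge0 (R : realType) (E : completeNormedModType R) (T : R -> R -> E -> E)
  k (f : E) : 0 <= normEr T k f.
Proof.
by rewrite /normEr addr_ge0 // sumr_ge0 // => i _; rewrite sumr_ge0.
Qed.

Lemma normEr_mono (R : realType) (E : completeNormedModType R) (T : R -> R -> E -> E)
  k l (f : E) : (k <= l)%N -> normEr T k f <= normEr T l f.
Proof.
move=> kl; rewrite -(subnK kl); elim: (l - k)%N => [|n IH] //=.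
rewrite addSn normEr_S; apply: (le_trans IH); rewrite lerDl.
by rewrite sumr_ge0.
Qed.

Lemma term_le (R : realType) (E : completeNormedModType R) (T : R -> R -> E -> E)
  (f : E) (js : seq bool) k : (size js <= k)%N -> `|apply_seq T js f| <= normEr T k f.
Proof.
move=> sk; apply: le_trans (normEr_mono T f sk).
case Hs: (size js) => [|n].
  by move/eqP: Hs; rewrite size_eq0 => /eqP ->; rewrite /normEr big_ord0 addr0.
rewrite normEr_S; apply: ler_wpDl; first exact: normEr_ge0.
have Ht : size js == n.+1 by rewrite Hs.
rewrite (bigD1 (Tuple Ht)) //= lerDl sumr_ge0 //.
Qed.

Lemma normEr_zero (R : realType) (E : completeNormedModType R) (T : R -> R -> E -> E)
  (HT : is_contr_rep T) k : normEr T k 0 = 0.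
Proof.
rewrite /normEr normr0 add0r big1 // => i _; rewrite big1 // => js _.
by rewrite apply_seq_zero // normr0.
Qed.

Lemma rec_ineq (R : realType) (E : completeNormedModType R) (T : R -> R -> E -> E)
  (HT : is_contr_rep T) r (f : E) (Hf : inEr T r f) m : (m.+2 <= r)%N ->
  normEr T m.+1 f ^+ 2 <= (2 + 16 * 4 ^+ r) * (normEr T m f * normEr T m.+2 f).
Proof.
move=> mr.
set am := normEr T m f; set am2 := normEr T m.+2 f.
have am0 : 0 <= am by exact: normEr_ge0.
have am20 : 0 <= am2 by exact: normEr_ge0.
have amm : am <= am2 by apply: normEr_mono; rewrite ltnW.
set S := \sum_(js : (m.+1).-tuple bool) `|apply_seq T js f|.
have HS : S ^+ 2 <= (4 ^+ m.+1) * (8 * (am * am2)).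
  have -> : (4 : R) ^+ m.+1 = (#|{: (m.+1).-tuple bool}|%:R) ^+ 2.
    by rewrite card_tuple card_bool -natrX -natrX -expnM mulnC expnM.
  apply: sum_sq => //; first by rewrite !mulr_ge0.
  case=> [[|j js'] Hsz] //=.
  have Hs' : size js' = m by move: Hsz => /eqP /= [].
  have D := Hf (j :: j :: js'); rewrite /= Hs' in D.
  have [[Dg Hx] Hy] := D mr.
  apply: (le_trans (L3 HT Hx Hy)).
  apply: ler_wpM2l => //; apply: ler_pM => //.
    by apply: term_le; rewrite Hs'.
  by have := @term_le _ _ T f (j :: j :: js') m.+2; rewrite /= Hs' => /(_ (leqnn _)).
have N4 : (4 : R) ^+ m.+1 <= 4 ^+ r.
  by rewrite ler_eXn2l // ?ltr1n // ltnW.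
have P0 : 0 <= am * am2 by rewrite mulr_ge0.
have N4P : 4 ^+ m.+1 * (am * am2) <= 4 ^+ r * (am * am2) by rewrite ler_wpM2r.
have am2P : am ^+ 2 <= am * am2 by rewrite expr2 ler_wpM2l.
rewrite normEr_S -/am -/S.
have S0 : 0 <= S by rewrite sumr_ge0.
have h1 : (am + S) ^+ 2 <= 2 * am ^+ 2 + 2 * S ^+ 2.
  have := sqr_ge0 (am - S); rewrite !expr2; lra.
apply: (le_trans h1).
move: HS N4P am2P; set Y := 4 ^+ m.+1; set X := (4:R) ^+ r; set P := am * am2.
move: (am ^+ 2) (S ^+ 2) => A B HS N4P am2P.
have : Y * (8 * P) = 8 * (Y * P) by ring.
move: (Y * P) (X * P) => YP XP HH.
rewrite mulrDl. lra.
Qed.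

Unset Implicit Arguments.

Theorem mainTheorem10 (R : realType) (r : nat) :
  exists Cr : R, forall k : nat, (k <= r)%N -> exists Ckr : R,
    forall (E : completeNormedModType R) (T : R -> R -> E -> E),
      is_contr_rep T ->
      forall f : E, inEr T r f ->
      forall s : R, 0 < s ->
        normEr T k f <=
          Ckr * powR `|f| (1 - k%:R / r%:R) * powR (normEr T r f) (k%:R / r%:R)
        /\ Kfun T r (s ^+ r) f <= Cr * s ^+ r * normEr T r f.
Proof.
exists 1 => k kr.
set C : R := 2 + 16 * 4 ^+ r.
set D := C ^+ (r * r * r).
exists (if k == 0%N then 1 else powR D (r%:R^-1)).
move=> E T HT f Hf s s0; split; last first.
  rewrite mul1r; apply: ge_inf.
    exists 0 => x [f0 [f1 [_ _ ->]]].
    apply: addr_ge0 => //; apply: mulr_ge0; [exact: exprn_ge0 (ltW s0) | exact: normEr_ge0].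
  exists 0, f; split => //; first by rewrite add0r.
  by rewrite normr0 add0r.
have [->|k0] := eqVneq k 0%N.
  rewrite /= mul0r subr0 powRr1 // powRr0 mul1r mulr1.
  by rewrite /normEr big_ord0 addr0.
have kp : (0 < k)%N by rewrite lt0n.
have rp : (0 < r)%N by apply: leq_trans kp kr.

have [->|fn0] := eqVneq f 0.
  rewrite normEr_zero //.
  by apply: mulr_ge0; [apply: mulr_ge0|]; exact: powR_ge0.
pose a i := normEr T i f.
have a0e : a 0%N = `|f| by rewrite /a /normEr big_ord0 addr0.
have apos i : (i <= r)%N -> 0 < a i.
  move=> _; apply: lt_le_trans (normEr_mono T f (leq0n i)).
  by rewrite -/(a 0%N) a0e normr_gt0.
have C1 : 1 <= C.
  rewrite /C -subr_ge0 addrAC.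
  by rewrite addr_ge0 // ?mulr_ge0 // ?exprn_ge0 //.
have Hrec k' : (0 < k')%N -> (k' < r)%N -> a k' ^+ 2 <= C * (a k'.-1 * a k'.+1).
  case: k' => [//|m] _ mr; exact: rec_ineq.
have Hm := seq_interp C1 apos Hrec kr.
rewrite -/(a k) -/(a r) -a0e.
set u := r%:R^-1 : R.
have rn0 : (r%:R : R) != 0 by rewrite pnatr_eq0 -lt0n.
have ak0 : 0 <= a k by exact: ltW (apos k kr).
have ar0 : 0 <= a r by exact: ltW (apos r (leqnn r)).
have a00 : 0 <= a 0%N by exact: ltW (apos 0%N (leq0n r)).
have D0 : 0 <= D by rewrite exprn_ge0 // (le_trans ler01 C1).
have pw x n : 0 <= x -> powR (x ^+ n) u = powR x (n%:R / r%:R).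
  by move=> x0; rewrite -powR_mulrn // -powRrM.
have -> : a k = powR (a k ^+ r) u.
  by rewrite pw // divff // powRr1.
apply: (le_trans (ge0_ler_powR _ _ _ Hm)).
- by rewrite invr_ge0 ler0n.
- by rewrite nnegrE exprn_ge0.
- by rewrite nnegrE mulr_ge0 // mulr_ge0 // exprn_ge0.
rewrite powRM // ?mulr_ge0 ?exprn_ge0 // powRM ?exprn_ge0 // mulrA.
rewrite !pw //.
have e : ((r - k)%:R / r%:R : R) = 1 - k%:R * u.
  by rewrite natrB // /u; field.
rewrite e.
  by [].
exact: le_trans ler01 C1.
Qed.
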